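(* Let $r\ge4$ and $n\ge1$. Define $d=b_r$ if $r\le (1+2^n)^2/2^n$, and $d=1+2^n$ otherwise. For $i\in\{0,1,\dots,2^n-1\}$ let $X_i=(x_{j,i})_{j\ge1}$ with $x_{j,i}=d^{\,j+i/2^n}$. Then each $X_i$ has robustness at most $r$, and for every $T\ge d$, $$\frac{T}{\max_{0\le i\le 2^n-1}\ell(X_i,T)}\ \le\ \frac{d^{1+\frac{1}{2^n}}}{d-1}.$$ (That is, the scheme that uses an error-free $n$-bit prediction to select the best schedule among $X_0,\dots,X_{2^n-1}$ has robustness at most $r$ and consistency at most $d^{1+1/2^n}/(d-1)$.)
   Context: A schedule is an increasing sequence $X=(x_j)_{j\ge1}$ of positive reals (contract lengths), with completion times $S_j=\sum_{k=1}^j x_k$. For $T>0$, $\ell(X,T)=\max\{x_j: S_j\le T\}$ ($0$ if none). The robustness of $X$ is $\sup_{j\ge2}S_j/x_{j-1}$. For $r\ge4$, $b_r=\frac{r+\sqrt{r^2-4r}}{2}$. *)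

(* Defs.v *)
From Stdlib Require Import Reals Lra Lia List ClassicalEpsilon.
From Coquelicot Require Import Coquelicot.
Open Scope R_scope.

(* A schedule is a sequence X : nat -> R, used at indices j >= 1. *)
Definition schedule := nat -> R.

Definition S (X : schedule) (j : nat) : R :=
  fold_right Rplus 0 (map X (seq 1 j)).

Definition is_ell (X : schedule) (T v : R) : Prop :=
  (exists j, (1 <= j)%nat /\ S X j <= T /\ v = X j /\
     (forall k, (1 <= k)%nat -> S X k <= T -> X k <= v))
  \/ ((forall j, (1 <= j)%nat -> T < S X j) /\ v = 0).

(* l(X,T), chosen by Hilbert epsilon (the max exists for positive schedules). *)
Definition ell (X : schedule) (T : R) : R :=
  epsilon (inhabits 0) (fun v => is_ell X T v).

Definition robustness (X : schedule) : Rbar :=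
  Lub_Rbar (fun y => exists j, (2 <= j)%nat /\ y = S X j / X (j - 1)%nat).

Definition b (r : R) : R := (r + sqrt (r ^ 2 - 4 * r)) / 2.

Definition dval (r : R) (n : nat) : R :=
  if Rle_dec r ((1 + 2 ^ n) ^ 2 / 2 ^ n) then b r else 1 + 2 ^ n.

Definition Xsched (d : R) (n i : nat) : schedule :=
  fun j => Rpower d (INR j + INR i / 2 ^ n).

(* max over i in {0,...,2^n - 1} of l(X_i, T) (all l values are >= 0) *)
Definition max_ell (d : R) (n : nat) (T : R) : R :=
  fold_right Rmax 0 (map (fun i => ell (Xsched d n i) T) (seq 0 (2 ^ n))).

(* Main.v *)
Require Import Defs.
From Stdlib Require Import Reals Lra Lia List ClassicalEpsilon Classical ZArith.
From Coquelicot Require Import Coquelicot.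
Open Scope R_scope.

Lemma fold_plus_init (l : list R) a :
  fold_right Rplus a l = fold_right Rplus 0 l + a.
Proof. induction l; simpl; [lra| rewrite IHl; lra]. Qed.

Lemma S_succ X j : S X (Datatypes.S j) = S X j + X (Datatypes.S j).
Proof.
  unfold S. rewrite seq_S, map_app, fold_right_app. simpl.
  rewrite fold_plus_init. replace (1 + j)%nat with (Datatypes.S j) by lia. lra.
Qed.

Lemma nat_search (P : nat -> Prop) m : forall a, P a -> ~ P (a + m)%nat ->
  exists k, (a <= k)%nat /\ P k /\ ~ P (Datatypes.S k).
Proof.
  induction m; intros a Pa nP.
  - rewrite Nat.add_0_r in nP. contradiction.
  - destruct (classic (P (Datatypes.S a))) as [H|H].
    + destruct (IHm (Datatypes.S a) H) as [k [? ?]].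
      { replace (Datatypes.S a + m)%nat with (a + Datatypes.S m)%nat by lia. exact nP. }
      exists k. split; [lia|tauto].
    + exists a. split; [lia|tauto].
Qed.

Section Gen.
Variable X : schedule.
Hypothesis Xge1 : forall k, 1 <= X k.
Hypothesis Xmon : forall k, X k <= X (Datatypes.S k).

Lemma Xmon_gen k m : (k <= m)%nat -> X k <= X m.
Proof. induction 1; [lra| specialize (Xmon m); lra]. Qed.

Lemma S_mon_gen k m : (k <= m)%nat -> S X k <= S X m.
Proof. induction 1; [lra| rewrite S_succ; specialize (Xge1 (Datatypes.S m)); lra]. Qed.

Lemma S_ge k : INR k <= S X k.
Proof. induction k; [simpl; unfold S; simpl; lra| rewrite S_succ, S_INR; specialize (Xge1 (Datatypes.S k)); lra]. Qed.

Lemma ell_exists T : exists v, is_ell X T v.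
Proof.
  destruct (Rle_dec (S X 1) T) as [H1|H1].
  - destruct (INR_unbounded T) as [N HN].
    assert (HN' : ~ (S X (1 + N) <= T)).
    { pose proof (S_ge (1+N)) as HS. rewrite plus_INR in HS. simpl INR in HS. lra. }
    destruct (nat_search (fun k => S X k <= T) N 1 H1 HN') as [k [Hk1 [Hk2 Hk3]]].
    exists (X k). left. exists k. repeat split; auto.
    intros k' Hk' Hk'T. apply Xmon_gen.
    destruct (Nat.le_gt_cases k' k) as [?|Hgt]; [assumption|].
    exfalso. apply Hk3. eapply Rle_trans; [apply S_mon_gen; exact Hgt|exact Hk'T].
  - exists 0. right. split; [|reflexivity]. intros j Hj.
    pose proof (S_mon_gen 1 j Hj). lra.
Qed.

Lemma ell_ge T j : (1 <= j)%nat -> S X j <= T -> X j <= ell X T.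
Proof.
  intros Hj HT. pose proof (epsilon_spec (inhabits 0) (fun v => is_ell X T v) (ell_exists T)) as He.
  fold (ell X T) in He.
  destruct He as [[k [_ [_ [_ Hk]]]] | [Hall _]].
  - apply Hk; assumption.
  - specialize (Hall j Hj). lra.
Qed.
End Gen.

Lemma fold_max_ge (f : nat -> R) l x : In x l -> f x <= fold_right Rmax 0 (map f l).
Proof.
  induction l; simpl; [tauto|]. intros [->|H].
  - apply Rmax_l.
  - eapply Rle_trans; [apply IHl; exact H| apply Rmax_r].
Qed.


Section Sched.
Variables (d : R) (n i : nat).
Hypothesis hd : 1 < d.
Let c := INR i / 2 ^ n.
Let P := Rpower d c.

Lemma c_ge0 : 0 <= c.
Proof. unfold c. apply Rmult_le_pos; [apply pos_INR| left; apply Rinv_0_lt_compat, pow_lt; lra]. Qed.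

Lemma P_ge1 : 1 <= P.
Proof. unfold P. rewrite <- (Rpower_O d) at 1 by lra. apply Rle_Rpower; [lra| apply c_ge0]. Qed.

Lemma Xs_eq m : Xsched d n i m = d ^ m * P.
Proof. unfold Xsched, P, c. rewrite Rpower_plus, Rpower_pow by lra. reflexivity. Qed.

Lemma Xs_ge1 k : 1 <= Xsched d n i k.
Proof. rewrite Xs_eq. pose proof P_ge1. pose proof (pow_R1_Rle d k ltac:(lra)). nra. Qed.

Lemma Xs_mon k : Xsched d n i k <= Xsched d n i (Datatypes.S k).
Proof. rewrite !Xs_eq. simpl. pose proof P_ge1. pose proof (pow_R1_Rle d k ltac:(lra)). assert (0 <= (d - 1) * (d ^ k * P)) by (apply Rmult_le_pos; nra). nra. Qed.

Lemma Ss_formula j : S (Xsched d n i) j * (d - 1) = P * (d ^ (Datatypes.S j) - d).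
Proof.
  induction j.
  - unfold S. simpl. ring.
  - rewrite S_succ, Rmult_plus_distr_r, IHj, Xs_eq. simpl. ring.
Qed.

Lemma ratio_bound j : (2 <= j)%nat -> S (Xsched d n i) j / Xsched d n i (j - 1)%nat <= d ^ 2 / (d - 1).
Proof.
  intro Hj. destruct j as [|[|m]]; try lia.
  replace (Datatypes.S (Datatypes.S m) - 1)%nat with (Datatypes.S m) by lia.
  assert (HS : S (Xsched d n i) (Datatypes.S (Datatypes.S m)) = P * (d ^ (Datatypes.S (Datatypes.S (Datatypes.S m))) - d) / (d - 1)).
  { rewrite <- Ss_formula. field. lra. }
  rewrite HS, Xs_eq. pose proof P_ge1. pose proof (pow_lt d (Datatypes.S m) ltac:(lra)).
  set (q := d ^ Datatypes.S m) in *.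
  replace (d ^ Datatypes.S (Datatypes.S (Datatypes.S m))) with (d * d * q) by (unfold q; simpl; ring).
  replace (P * (d * d * q - d) / (d - 1) / (q * P)) with (d ^ 2 / (d - 1) - d / ((d - 1) * q)) by (field; repeat split; apply Rgt_not_eq; lra).
  assert (0 < d / ((d - 1) * q)) by (apply Rdiv_lt_0_compat; [lra| apply Rmult_lt_0_compat; lra]).
  lra.
Qed.
End Sched.

Lemma exp_le' x y : x <= y -> exp x <= exp y.
Proof. intros [H|H]; [left; apply exp_increasing; auto| subst; lra]. Qed.

Lemma ln_le' x y : 0 < x -> x <= y -> ln x <= ln y.
Proof. intros Hx [H|H]; [left; apply ln_increasing; auto| subst; lra]. Qed.

Lemma witness (d : R) (n : nat) (hd : 1 < d) (T : R) (hT : d <= T) :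
  exists i j, (i < 2 ^ n)%nat /\ (1 <= j)%nat /\ S (Xsched d n i) j <= T /\
    T / Xsched d n i j <= Rpower d (1 + 1 / 2 ^ n) / (d - 1).
Proof.
  set (N := 2 ^ n). assert (HN : 0 < N) by (apply pow_lt; lra).
  assert (HN1 : 1 <= N) by (apply pow_R1_Rle; lra).
  assert (HB : Rpower d (1 + 1 / N) = d * Rpower d (1 / N)).
  { rewrite Rpower_plus, Rpower_1 by lra. reflexivity. }
  assert (HR1 : 1 <= Rpower d (1 / N)).
  { rewrite <- (Rpower_O d) at 1 by lra. apply Rle_Rpower; [lra|].
    apply Rmult_le_pos; [lra| left; apply Rinv_0_lt_compat; lra]. }
  assert (Hpow : (0 < 2 ^ n)%nat).
  { apply Nat.neq_0_lt_0, Nat.pow_nonzero. lia. }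
  set (y := T * (d - 1) / d).
  destruct (Rlt_dec y d) as [Hy|Hy].
  - exists 0%nat, 1%nat. split; [exact Hpow|]. split; [lia|].
    assert (HX : Xsched d n 0%nat 1%nat = d).
    { rewrite Xs_eq by lra. simpl INR. replace (0 / 2 ^ n) with 0 by (unfold Rdiv; ring).
      rewrite Rpower_O by lra. ring. }
    assert (HS1 : S (Xsched d n 0%nat) 1%nat = d).
    { rewrite S_succ, HX. unfold S. simpl. ring. }
    rewrite HS1, HX. split; [lra|]. fold N. rewrite HB.
    unfold y in Hy.
    assert (T < d * d / (d - 1)).
    { apply (Rmult_lt_reg_r ((d - 1) / d)). apply Rdiv_lt_0_compat; lra.
      replace (d * d / (d - 1) * ((d - 1) / d)) with d by (field; split; apply Rgt_not_eq; lra).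
      replace (T * ((d - 1) / d)) with (T * (d - 1) / d) by (field; apply Rgt_not_eq; lra). exact Hy. }
    apply (Rmult_le_reg_r (d * (d - 1))). nra.
    replace (T / d * (d * (d - 1))) with (T * (d - 1)) by (field; apply Rgt_not_eq; lra).
    replace (d * Rpower d (1 / N) / (d - 1) * (d * (d - 1))) with (d * d * Rpower d (1 / N)) by (field; apply Rgt_not_eq; lra).
    assert (T * (d - 1) < d * d).
    { apply (Rmult_lt_compat_r (d - 1)) in H; [|lra].
      replace (d * d / (d - 1) * (d - 1)) with (d * d) in H by (field; apply Rgt_not_eq; lra). exact H. }
    assert (0 < d * d) by nra. nra.
  - apply Rnot_lt_le in Hy.
    assert (Hy0 : 0 < y) by lra.
    set (L := ln d).
    assert (HL : 0 < L) by (unfold L; rewrite <- ln_1; apply ln_increasing; lra).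
    set (x := N * ln y / L).
    assert (HxN : N <= x).
    { unfold x. apply (Rmult_le_reg_r L); [exact HL|].
      replace (N * ln y / L * L) with (N * ln y) by (field; apply Rgt_not_eq; lra).
      apply Rmult_le_compat_l; [lra|]. apply ln_le'; lra. }
    destruct (base_Int_part x) as [Hz1 Hz2].
    set (z := Int_part x) in *.
    assert (HzN : (Z.of_nat (2 ^ n) <= z)%Z).
    { assert (Z.of_nat (2 ^ n) - 1 < z)%Z; [|lia].
      apply lt_IZR. rewrite minus_IZR, <- INR_IZR_INZ, pow_INR. simpl INR. replace ((1+1)^n) with N by (unfold N; f_equal; ring). lra. }
    set (k := Z.to_nat z).
    assert (Hk : INR k = IZR z).
    { unfold k. rewrite INR_IZR_INZ, Z2Nat.id by lia. reflexivity. }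
    assert (Hkn : (2 ^ n <= k)%nat) by (unfold k; lia).
    set (j := (k / 2 ^ n)%nat). set (i := (k mod 2 ^ n)%nat).
    assert (Hkji : k = (2 ^ n * j + i)%nat) by (apply Nat.div_mod; lia).
    assert (Hj1 : (1 <= j)%nat) by (apply Nat.div_str_pos; lia).
    assert (Hi : (i < 2 ^ n)%nat) by (apply Nat.mod_upper_bound; lia).
    assert (HX : Xsched d n i j = Rpower d (INR k / N)).
    { unfold Xsched. f_equal. rewrite Hkji, plus_INR, mult_INR, pow_INR. simpl INR. fold N.
      replace ((1+1)^n) with N by (unfold N; f_equal; ring). field. apply Rgt_not_eq; lra. }
    assert (HXle : Xsched d n i j <= y).
    { rewrite HX. unfold Rpower. rewrite <- (exp_ln y) by lra. apply exp_le'. fold L.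
      apply (Rmult_le_reg_r (N / L)). apply Rdiv_lt_0_compat; lra.
      replace (INR k / N * L * (N / L)) with (INR k) by (field; split; apply Rgt_not_eq; lra).
      replace (ln y * (N / L)) with x by (unfold x; field; apply Rgt_not_eq; lra). lra. }
    assert (HXgt : y < Xsched d n i j * Rpower d (1 / N)).
    { rewrite HX, <- Rpower_plus. unfold Rpower. rewrite <- (exp_ln y) at 1 by lra. apply exp_increasing. fold L.
      apply (Rmult_lt_reg_r (N / L)). apply Rdiv_lt_0_compat; lra.
      replace ((INR k / N + 1 / N) * L * (N / L)) with (INR k + 1) by (field; split; apply Rgt_not_eq; lra).
      replace (ln y * (N / L)) with x by (unfold x; field; apply Rgt_not_eq; lra). lra. }
    exists i, j. split; [exact Hi|]. split; [exact Hj1|].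
    pose proof (Ss_formula d n i hd j) as HSf.
    rewrite Xs_eq in HX, HXle, HXgt by lra.
    set (P := Rpower d (INR i / 2 ^ n)) in *.
    assert (HP : 1 <= P) by (apply P_ge1; lra).
    assert (Hdj : 0 < d ^ j) by (apply pow_lt; lra).
    assert (HX0 : 0 < d ^ j * P) by nra.
    split.
    + assert (S (Xsched d n i) j * (d - 1) < T * (d - 1)); [| nra].
      rewrite HSf. simpl. unfold y in HXle.
      assert (d ^ j * P * d <= T * (d - 1)).
      { apply (Rmult_le_compat_r d) in HXle; [|lra].
        replace (T * (d - 1) / d * d) with (T * (d - 1)) in HXle by (field; apply Rgt_not_eq; lra). exact HXle. }
      nra.
    + rewrite Xs_eq by lra. fold P. fold N. rewrite HB.
      assert (HT : T = y * d / (d - 1)) by (unfold y; field; split; apply Rgt_not_eq; lra).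
      rewrite HT.
      apply (Rmult_le_reg_r ((d - 1) * (d ^ j * P) / d)). apply Rdiv_lt_0_compat; [nra|lra].
      replace (y * d / (d - 1) / (d ^ j * P) * ((d - 1) * (d ^ j * P) / d)) with y by (field; repeat split; apply Rgt_not_eq; lra).
      replace (d * Rpower d (1 / N) / (d - 1) * ((d - 1) * (d ^ j * P) / d)) with (d ^ j * P * Rpower d (1 / N)) by (field; repeat split; apply Rgt_not_eq; lra).
      lra.
Qed.

Lemma d_prop (r : R) (n : nat) : 4 <= r -> 1 < dval r n /\ dval r n ^ 2 / (dval r n - 1) <= r.
Proof.
  intro hr. unfold dval. destruct (Rle_dec r ((1 + 2 ^ n) ^ 2 / 2 ^ n)) as [H|H].
  - unfold b. set (s := sqrt (r ^ 2 - 4 * r)).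
    assert (Hs0 : 0 <= s) by apply sqrt_pos.
    assert (Hs2 : s * s = r ^ 2 - 4 * r) by (apply sqrt_sqrt; nra).
    assert (Hb1 : 1 < (r + s) / 2) by lra.
    split; [exact Hb1|].
    right. set (bb := (r + s) / 2) in *.
    assert (Hbb : bb ^ 2 = r * (bb - 1)) by (unfold bb; nra).
    rewrite Hbb. field. apply Rgt_not_eq. lra.
  - assert (HN : 0 < 2 ^ n) by (apply pow_lt; lra).
    assert (HN1 : 1 <= 2 ^ n) by (apply pow_R1_Rle; lra).
    split; [lra|]. replace (1 + 2 ^ n - 1) with (2 ^ n) by ring. lra.
Qed.

Theorem theorem3 (r : R) (n : nat) (hr : 4 <= r) (hn : (1 <= n)%nat) :
  let d := dval r n in
  (forall i : nat, (i < 2 ^ n)%nat -> Rbar_le (robustness (Xsched d n i)) r) /\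
  (forall T : R, d <= T ->
     T / max_ell d n T <= Rpower d (1 + 1 / 2 ^ n) / (d - 1)).
Proof.
  intro d. destruct (d_prop r n hr) as [hd hdr]. fold d in hd, hdr.
  split.
  - intros i _. unfold robustness. apply (proj2 (Lub_Rbar_correct _)).
    intros y [j [Hj ->]]. simpl. eapply Rle_trans; [apply ratio_bound; auto; lra| exact hdr].
  - intros T hT.
    destruct (witness d n hd T hT) as [i [j [Hi [Hj [HS HB]]]]].
    assert (Hx1 : 1 <= Xsched d n i j) by (apply Xs_ge1; lra).
    assert (Hell : Xsched d n i j <= max_ell d n T).
    { eapply Rle_trans.
      - apply (ell_ge (Xsched d n i)); [intro; apply Xs_ge1; lra| intro; apply Xs_mon; lra| exact Hj| exact HS].
      - unfold max_ell. apply (fold_max_ge (fun i => ell (Xsched d n i) T)).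
        apply in_seq. lia. }
    eapply Rle_trans; [|exact HB].
    unfold Rdiv. apply Rmult_le_compat_l; [lra|]. apply Rinv_le_contravar; lra.
Qed.
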